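(* Let $X$ be a uniformly locally finite metric space and let $h$ and $k$ be admissible operators on $\ell_2(X)$. Then: (a) $\|h-k\|=\|(h-k)\restriction_{c_{00}(X)}\|$, where $h-k$ is defined on $\mathrm{dom}(h)\cap\mathrm{dom}(k)$ and norms are possibly infinite; (b) if $h-k$ is bounded on $c_{00}(X)$, then $\mathrm{dom}(h)=\mathrm{dom}(k)$.
   Context: $(\delta_x)$ is the canonical basis of $\ell_2(X)$ and $c_{00}(X)$ the space of finitely supported vectors. An operator $h$ on $\ell_2(X)$ (a possibly unbounded linear map on a subspace $\mathrm{dom}(h)$) is admissible if it is closed, $c_{00}(X)\subseteq\mathrm{dom}(h)$, and $h\xi=\sum_{y\in X}\langle\xi,\delta_y\rangle h\delta_y$ for all $\xi\in\mathrm{dom}(h)$. For an operator $h$, $\|h\|=\sup\{\|h\xi\|:\xi\in\mathrm{dom}(h),\|\xi\|\le1\}\in[0,\infty]$. *)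

(* Defs.v *)
From HB Require Import structures.
From mathcomp Require Import all_boot all_order all_algebra.
From mathcomp Require Import all_classical all_reals all_analysis.
From mathcomp.real_closed Require Import complex.
Set Implicit Arguments. Unset Strict Implicit. Unset Printing Implicit Defensive.
Import Order.TTheory GRing.Theory Num.Theory.
Import numFieldNormedType.Exports.
Local Open Scope classical_set_scope.
Local Open Scope ring_scope.

Section L2.
Variable R : realType.
Variable X : choiceType.

Definition is_metric (d : X -> X -> R) : Prop :=
  (forall x y, 0 <= d x y) /\ (forall x y, d x y = 0 <-> x = y) /\
  (forall x y, d x y = d y x) /\ (forall x y z, d x z <= d x y + d y z).

Definition unif_loc_finite (d : X -> X -> R) : Prop :=
  forall r : R, 0 < r -> exists N : nat,
    forall x : X, ([set y | d x y <= r] #<= `I_N)%card.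

Definition vec := X -> R[i].

Definition sqmod (z : R[i]) : R := (complex.Re z) ^+ 2 + (complex.Im z) ^+ 2.

Definition sqnorm (xi : vec) : \bar R := (\esum_(x in [set: X]) (sqmod (xi x))%:E)%E.

Definition l2 : set vec := [set xi | (sqnorm xi < +oo)%E].

Definition l2norm (xi : vec) : R := Num.sqrt (fine (sqnorm xi)).

Definition vsub (xi eta : vec) : vec := fun x => xi x - eta x.

Definition delta (y : X) : vec := fun x => if x == y then 1 else 0.

Definition c00 : set vec := [set xi | finite_set [set x | xi x != 0]].

Definition is_operator (dom : set vec) (h : vec -> vec) : Prop :=
  dom `<=` l2 /\ dom (fun _ => 0) /\
  (forall xi eta, dom xi -> dom eta -> dom (fun x => xi x + eta x)) /\
  (forall (a : R[i]) xi, dom xi -> dom (fun x => a * xi x)) /\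
  (forall xi, dom xi -> l2 (h xi)) /\
  (forall xi eta, dom xi -> dom eta -> h (fun x => xi x + eta x) = (fun x => h xi x + h eta x)) /\
  (forall (a : R[i]) xi, dom xi -> h (fun x => a * xi x) = (fun x => a * h xi x)).

Definition is_closed_op (dom : set vec) (h : vec -> vec) : Prop :=
  forall (u : nat -> vec) (xi eta : vec),
    (forall n, dom (u n)) -> l2 xi -> l2 eta ->
    (fun n => l2norm (vsub (u n) xi)) @ \oo --> (0 : R^o) ->
    (fun n => l2norm (vsub (h (u n)) eta)) @ \oo --> (0 : R^o) ->
    dom xi /\ h xi = eta.

(* h xi = sum_y <xi, delta_y> h delta_y, the sum converging (unconditionally)
   in the norm of l2(X); note <xi, delta_y> = xi y *)
Definition expansion (h : vec -> vec) (xi : vec) : Prop :=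
  forall e : R, 0 < e -> exists F0 : set X, finite_set F0 /\
    forall F : set X, finite_set F -> F0 `<=` F ->
      l2norm (vsub (h xi) (fun x => \sum_(y \in F) xi y * h (delta y) x)) < e.

Definition admissible (dom : set vec) (h : vec -> vec) : Prop :=
  is_operator dom h /\ is_closed_op dom h /\ c00 `<=` dom /\
  (forall xi, dom xi -> expansion h xi).

Definition opnorm (D : set vec) (h : vec -> vec) : \bar R :=
  ereal_sup [set (l2norm (h xi))%:E | xi in [set xi | D xi /\ l2norm xi <= 1]].

End L2.

(* Main.v *)
Require Import Defs.
From HB Require Import structures.
From mathcomp Require Import all_boot all_order all_algebra.
From mathcomp Require Import all_classical all_reals all_analysis.
From mathcomp.real_closed Require Import complex.
From mathcomp Require Import ring lra.
Set Implicit Arguments. Unset Strict Implicit. Unset Printing Implicit Defensive.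
Import Order.TTheory GRing.Theory Num.Theory.
Import numFieldNormedType.Exports.
Local Open Scope classical_set_scope.
Local Open Scope ring_scope.
Local Open Scope complex_scope.

Section C.
Variable R : realType.

Lemma cauchy_seq_cvg (f : nat -> R) :
  (forall e, 0 < e -> exists N, forall n m, (N <= n)%N -> (N <= m)%N -> `|f n - f m| < e) ->
  cvgn f.
Proof.
move=> H; apply: cauchy_cvg; apply: cauchy_exP => e e0.
have [N HN] := H e e0; exists (f N); exists N => // n /= Nn.
rewrite /ball /=; exact: HN.
Qed.

Lemma cvg_sum_seq (T : eqType) (s : seq T) (f : nat -> T -> R) (g : T -> R) :
  (forall x, f ^~ x @ \oo --> g x) ->
  (fun m => \sum_(x <- s) f m x) @ \oo --> \sum_(x <- s) g x.
Proof.
move=> H; elim: s => [|y s IH].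
  rewrite big_nil; under eq_fun do rewrite big_nil; exact: cvg_cst.
rewrite big_cons; under eq_fun do rewrite big_cons; exact: cvgD.
Qed.

Lemma harmonic_anti n m : (n <= m)%N -> harmonic m <= harmonic n :> R.
Proof.
move=> nm; rewrite /harmonic lef_pV2 ?posrE ?ltr0n // ler_nat; exact: nm.
Qed.

Lemma harmonic_gt0 n : 0 < harmonic n :> R.
Proof. by rewrite /harmonic invr_gt0 ltr0n. Qed.

Lemma harmonic_small (c e : R) : 0 < e -> exists N, c * harmonic N < e.
Proof.
move=> e0.
have : (fun n => c * harmonic n) @ \oo --> (c * 0 : R).
  apply: cvgMr; exact: cvg_harmonic.
rewrite mulr0 => /cvgrPdist_lt /(_ e e0) [N _ HN].
exists N; have := HN N (leqnn N); rewrite sub0r normrN => H.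
exact: le_lt_trans (ler_norm _) H.
Qed.

End C.

Lemma cvg_sqr_diff (R : realType) (a : R) (f : nat -> R) :
  cvgn f -> (fun m => (a - f m) ^+ 2) @ \oo --> (a - lim (f @ \oo)) ^+ 2.
Proof.
move=> cf.
have : (fun m => (a - f m) * (a - f m)) @ \oo --> (a - lim (f @ \oo)) * (a - lim (f @ \oo)).
  by apply: cvgM; apply: cvgB => //; exact: cvg_cst.
have E : (fun m => (a - f m) ^+ 2) = (fun m => (a - f m) * (a - f m)).
  by apply: funext => m; rewrite expr2.
by rewrite E expr2.
Qed.

Section Aux.
Variable R : realType.
Variable X : choiceType.
Local Notation vec := (vec R X).
Local Notation L2 := (@l2 R X).
Local Notation nrm := (@l2norm R X).
Implicit Types (v a b : vec) (s : seq X).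

Definition sqs (v : vec) (s : seq X) : R := \sum_(x <- s) sqmod (v x).

Lemma sqmod_ge0 (z : R[i]) : 0 <= sqmod z.
Proof. by rewrite /sqmod addr_ge0 // sqr_ge0. Qed.

Lemma sqs_ge0 v s : 0 <= sqs v s.
Proof. by rewrite /sqs sumr_ge0 // => x _; apply: sqmod_ge0. Qed.

Lemma sqnorm_ge0 v : (0 <= sqnorm v)%E.
Proof. by apply: esum_ge0 => x _; rewrite lee_fin sqmod_ge0. Qed.

Lemma sqs_le_sqnorm v s : uniq s -> ((sqs v s)%:E <= sqnorm v)%E.
Proof.
move=> us; rewrite /sqnorm; apply: esum_ge.
exists [set x | x \in s]; first by split => //; apply: finite_seq.
rewrite fsbig_finite /=; last exact: finite_seq.
rewrite sumEFin lee_fin /sqs le_eqVlt; apply/orP; left; apply/eqP.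
apply: perm_big; apply: uniq_perm => //.
move=> x; rewrite in_fset_set; last exact: finite_seq.
by rewrite mem_setE.
Qed.

Lemma sqnorm_le v c : (forall s, uniq s -> sqs v s <= c) -> (sqnorm v <= c%:E)%E.
Proof.
move=> H; rewrite /sqnorm /esum; apply: ge_ereal_sup => _ [A [finA _] <-].
rewrite fsbig_finite // sumEFin lee_fin; apply: H; exact: finmap.fset_uniq.
Qed.


Lemma fin_sqnorm v : L2 v -> sqnorm v = (fine (sqnorm v))%:E.
Proof.
move=> Lv; rewrite fineK //; rewrite ge0_fin_numE //; exact: sqnorm_ge0.
Qed.

Lemma nrm_ge0 v : 0 <= nrm v.
Proof. exact: sqrtr_ge0. Qed.

Lemma nrm_sq v : L2 v -> nrm v ^+ 2 = fine (sqnorm v).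
Proof. by move=> _; rewrite /l2norm sqr_sqrtr // fine_ge0 // sqnorm_ge0. Qed.

Lemma l2_sqs v s : L2 v -> uniq s -> sqs v s <= nrm v ^+ 2.
Proof.
move=> Lv us; rewrite nrm_sq // -lee_fin -fin_sqnorm //; exact: sqs_le_sqnorm.
Qed.

Lemma sqs_l2 v c : 0 <= c -> (forall s, uniq s -> sqs v s <= c ^+ 2) ->
  L2 v /\ nrm v <= c.
Proof.
move=> c0 H; have Hle := @sqnorm_le v (c ^+ 2) H.
have Lv : L2 v by rewrite /l2 /=; apply: le_lt_trans Hle _; exact: ltry.
split => //; rewrite /l2norm -(ger0_norm c0) -sqrtr_sqr ler_sqrt ?sqr_ge0 //.
by rewrite -lee_fin -fin_sqnorm.
Qed.

Lemma sqnorm_eq a b : (forall x, sqmod (a x) = sqmod (b x)) -> sqnorm a = sqnorm b.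
Proof. by move=> H; apply: eq_esum => x _; rewrite H. Qed.

Lemma l2_eq a b : (forall x, sqmod (a x) = sqmod (b x)) -> L2 a -> L2 b.
Proof. by move=> H; rewrite /l2 /= (@sqnorm_eq a b H). Qed.

Lemma nrm_eq a b : (forall x, sqmod (a x) = sqmod (b x)) -> nrm a = nrm b.
Proof. by move=> H; rewrite /l2norm (@sqnorm_eq a b H). Qed.

Lemma sqmod_sub_sym (z w : R[i]) : sqmod (z - w) = sqmod (w - z).
Proof. by case: z => a b; case: w => c d; rewrite /sqmod /=; lra. Qed.

Lemma nrm_sym a b : nrm (vsub a b) = nrm (vsub b a).
Proof. by apply: nrm_eq => x; rewrite /vsub sqmod_sub_sym. Qed.

Lemma sqmod_tri (z w : R[i]) t u : 0 < t -> 0 < u -> t * u = 1 ->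
  sqmod (z + w) <= (1 + t) * sqmod z + (1 + u) * sqmod w.
Proof.
case: z => a b; case: w => c d /= t0 u0 tu; rewrite /sqmod /=.
have h1 : 0 <= u * (t * a - c) ^+ 2 by rewrite mulr_ge0 // ?sqr_ge0 // ltW.
have h2 : 0 <= u * (t * b - d) ^+ 2 by rewrite mulr_ge0 // ?sqr_ge0 // ltW.
have e1 : u * (t * a - c) ^+ 2 = (t * u) * t * a ^+ 2 - 2 * (t * u) * a * c + u * c ^+ 2 by ring.
have e2 : u * (t * b - d) ^+ 2 = (t * u) * t * b ^+ 2 - 2 * (t * u) * b * d + u * d ^+ 2 by ring.
rewrite e1 tu in h1; rewrite e2 tu in h2.
have -> : (a + c) ^+ 2 + (b + d) ^+ 2 = a ^+ 2 + b ^+ 2 + c ^+ 2 + d ^+ 2 + 2 * a * c + 2 * b * d by ring.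
have -> : (1 + t) * (a ^+ 2 + b ^+ 2) + (1 + u) * (c ^+ 2 + d ^+ 2) = a ^+ 2 + b ^+ 2 + c ^+ 2 + d ^+ 2 + (t * a ^+ 2 + t * b ^+ 2 + u * c ^+ 2 + u * d ^+ 2) by ring.
rewrite !mul1r in h1 h2; lra.
Qed.


Lemma sqs_tri_t a b A B t u : 0 < t -> 0 < u -> t * u = 1 ->
  (forall s, uniq s -> sqs a s <= A ^+ 2) ->
  (forall s, uniq s -> sqs b s <= B ^+ 2) ->
  forall s, uniq s -> sqs (fun x => a x + b x) s <= (1 + t) * A ^+ 2 + (1 + u) * B ^+ 2.
Proof.
move=> t0 u0 tu Ha Hb s us.
apply: (@le_trans _ _ ((1 + t) * sqs a s + (1 + u) * sqs b s)).
  rewrite /sqs !mulr_sumr -big_split /=; apply: ler_sum => x _; exact: sqmod_tri.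
apply: lerD; apply: ler_wpM2l.
- by rewrite addr_ge0 // ltW.
- exact: Ha.
- by rewrite addr_ge0 // ltW.
- exact: Hb.
Qed.

Lemma aux_bound (A B e : R) : 0 <= A -> 0 <= B -> 0 < e ->
  (1 + (B + e) / (A + e)) * A ^+ 2 + (1 + (A + e) / (B + e)) * B ^+ 2
   <= (A + B) ^+ 2 + e * (A + B).
Proof.
move=> A0 B0 e0.
have Ae : 0 < A + e by rewrite ltr_wpDl.
have Be : 0 < B + e by rewrite ltr_wpDl.
have k1 : (B + e) / (A + e) * A ^+ 2 <= (B + e) * A.
  rewrite mulrAC ler_pdivrMr // -mulrA; apply: ler_wpM2l; first exact: ltW.
  rewrite expr2; apply: ler_wpM2l => //; by rewrite lerDl ltW.
have k2 : (A + e) / (B + e) * B ^+ 2 <= (A + e) * B.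
  rewrite mulrAC ler_pdivrMr // -mulrA; apply: ler_wpM2l; first exact: ltW.
  rewrite expr2; apply: ler_wpM2l => //; by rewrite lerDl ltW.
have -> : (A + B) ^+ 2 + e * (A + B) = A ^+ 2 + (B + e) * A + (B ^+ 2 + (A + e) * B) by ring.
rewrite !mulrDl !mul1r; lra.
Qed.

Lemma sqs_tri a b A B : 0 <= A -> 0 <= B ->
  (forall s, uniq s -> sqs a s <= A ^+ 2) ->
  (forall s, uniq s -> sqs b s <= B ^+ 2) ->
  forall s, uniq s -> sqs (fun x => a x + b x) s <= (A + B) ^+ 2.
Proof.
move=> A0 B0 Ha Hb s us; apply/ler_addgt0Pr => eps eps0.
pose e := eps / (A + B + 1).
have AB1 : 0 < A + B + 1 by rewrite ltr_wpDl ?addr_ge0.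
have e0 : 0 < e by rewrite divr_gt0.
have Ae : 0 < A + e by rewrite ltr_wpDl.
have Be : 0 < B + e by rewrite ltr_wpDl.
have t0 : 0 < (B + e) / (A + e) by rewrite divr_gt0.
have u0 : 0 < (A + e) / (B + e) by rewrite divr_gt0.
have tu : (B + e) / (A + e) * ((A + e) / (B + e)) = 1.
  by rewrite mulrA divfK ?gt_eqF // divff // gt_eqF.
apply: le_trans (@sqs_tri_t a b A B _ _ t0 u0 tu Ha Hb s us) _.
apply: le_trans (@aux_bound A B e A0 B0 e0) _; rewrite lerD2l.
have : e * (A + B + 1) = eps by rewrite divfK // gt_eqF.
move=> H; rewrite -H; apply: ler_wpM2l; first exact: ltW.
by rewrite lerDl.
Qed.


Lemma sqmodN (z : R[i]) : sqmod (- z) = sqmod z.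
Proof. by case: z => p q; rewrite /sqmod /= !sqrrN. Qed.

Lemma sqmodZ (r : R) (z : R[i]) : sqmod (r%:C * z) = r ^+ 2 * sqmod z.
Proof. by case: z => p q; rewrite /sqmod /=; ring. Qed.

Lemma sqs_congr a b s : (forall x, sqmod (a x) = sqmod (b x)) -> sqs a s = sqs b s.
Proof. by move=> H; apply: eq_bigr => x _; rewrite H. Qed.

Lemma l2_vsub a b : L2 a -> L2 b -> L2 (vsub a b).
Proof.
move=> La Lb.
have H := @sqs_tri a (fun x => - b x) (nrm a) (nrm b) (nrm_ge0 a) (nrm_ge0 b)
  (fun s us => l2_sqs La us).
have Hb : forall s, uniq s -> sqs (fun x => - b x) s <= nrm b ^+ 2.
  by move=> s us; rewrite (@sqs_congr _ b) ?l2_sqs // => x; rewrite sqmodN.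
have := sqs_l2 (addr_ge0 (nrm_ge0 a) (nrm_ge0 b)) (H Hb).
by case.
Qed.

Lemma l2_tri a b c : L2 (vsub a b) -> L2 (vsub b c) ->
  L2 (vsub a c) /\ nrm (vsub a c) <= nrm (vsub a b) + nrm (vsub b c).
Proof.
move=> L1 L2'.
have H := @sqs_tri (vsub a b) (vsub b c) _ _ (nrm_ge0 _) (nrm_ge0 _)
  (fun s us => l2_sqs L1 us) (fun s us => l2_sqs L2' us).
apply: sqs_l2; first by rewrite addr_ge0 // nrm_ge0.
move=> s us; rewrite (@sqs_congr _ (fun x => vsub a b x + vsub b c x)) ?H //.
by move=> x; rewrite /vsub addrA subrK.
Qed.

Lemma l2_zero : L2 (fun _ => 0) /\ nrm (fun _ => 0) <= 0.
Proof.
apply: sqs_l2 => // s _; rewrite /sqs big1 ?expr0n //= => x _.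
by rewrite /sqmod /= expr0n /= addr0.
Qed.

Lemma sqs_cons v y s : sqs v (y :: s) = sqmod (v y) + sqs v s.
Proof. by rewrite /sqs big_cons. Qed.

Lemma sqmod_le_nrm v y : L2 v -> sqmod (v y) <= nrm v ^+ 2.
Proof.
move=> Lv; have := l2_sqs Lv (isT : uniq [:: y]).
by rewrite sqs_cons /sqs big_nil addr0.
Qed.

Lemma c00_sub v s : (forall x, v x != 0 -> x \in s) -> @c00 R X v.
Proof.
move=> H; rewrite /c00 /=; apply: (@sub_finite_set _ _ [set x | x \in s]).
  by move=> x /= /H.
exact: finite_seq.
Qed.

Definition proj s v : vec := fun x => if x \in s then v x else 0.

Lemma proj_c00 s v : @c00 R X (proj s v).
Proof. by apply: (@c00_sub _ s) => x; rewrite /proj; case: ifP => // _; rewrite eqxx. Qed.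

Lemma delta_c00 (c : R[i]) (y : X) : @c00 R X (fun x => c * @delta R X y x).
Proof.
apply: (@c00_sub _ [:: y]) => x; rewrite /delta mem_seq1.
by case: (x == y) => //; rewrite mulr0 eqxx.
Qed.


Lemma delta_c00' (y : X) : @c00 R X (@delta R X y).
Proof.
apply: (@c00_sub _ [:: y]) => x; rewrite /delta mem_seq1.
by case: (x == y) => //; rewrite eqxx.
Qed.

Section Op.
Variable dom : set vec.
Variable h : vec -> vec.

Lemma op_zero : is_operator dom h -> h (fun _ => 0) = fun _ => 0.
Proof.
case=> [_ [d0 [_ [_ [_ [_ hs]]]]]].
have := hs 0 (fun _ => 0) d0.
have -> : (fun _ : X => (0 : R[i]) * 0) = (fun _ => 0) by apply: funext => x; rewrite mul0r.
move=> ->; apply: funext => x; by rewrite mul0r.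
Qed.

Lemma op_sub u w : is_operator dom h -> dom u -> dom w ->
  h (vsub u w) = vsub (h u) (h w).
Proof.
case=> [_ [d0 [dD [dZ [_ [hD hs]]]]]] du dw.
have -> : vsub u w = (fun x => u x + (fun x => -1 * w x) x).
  by apply: funext => x; rewrite /vsub mulN1r.
rewrite hD //; last exact: dZ.
rewrite hs //; apply: funext => x; by rewrite /vsub mulN1r.
Qed.

Lemma op_proj s xi : is_operator dom h -> @c00 R X `<=` dom -> uniq s ->
  h (proj s xi) = fun x => \sum_(y <- s) xi y * h (@delta R X y) x.
Proof.
move=> Hop Hc; elim: s => [|y s IH] /=.
  have -> : proj [::] xi = fun _ => 0 by apply: funext => x.
  by move=> _; rewrite op_zero //; apply: funext => x; rewrite big_nil.
move=> /andP [ys us].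
have -> : proj (y :: s) xi = (fun x => (fun x => xi y * @delta R X y x) x + proj s xi x).
  apply: funext => x; rewrite /proj /delta in_cons.
  have [->|nxy] := eqVneq x y; first by rewrite (negbTE ys) mulr1 addr0.
  by rewrite mulr0 add0r.
case: (Hop) => [_ [_ [_ [_ [_ [hD hs]]]]]].
rewrite hD; [|exact/Hc/delta_c00|exact/Hc/proj_c00].
rewrite hs; last exact/Hc/delta_c00'.
rewrite IH //; apply: funext => x; by rewrite big_cons.
Qed.

End Op.


Lemma proj_le v s : L2 v -> L2 (proj s v) /\ nrm (proj s v) <= nrm v.
Proof.
move=> Lv; apply: sqs_l2; first exact: nrm_ge0.
move=> t ut; apply: le_trans (l2_sqs Lv ut); apply: ler_sum => x _.
by rewrite /proj; case: ifP => // _; rewrite /sqmod /= expr0n /= addr0 sqmod_ge0.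
Qed.

Lemma sum_set_seq (f : X -> R[i]) s : uniq s ->
  \sum_(y \in [set x | x \in s]) f y = \sum_(y <- s) f y.
Proof.
move=> us; rewrite fsbig_finite /=; last exact: finite_seq.
apply: perm_big; apply: uniq_perm => //.
move=> x; rewrite in_fset_set; last exact: finite_seq.
by rewrite mem_setE.
Qed.

Lemma exp_proj dom h xi e : admissible dom h -> dom xi -> 0 < e ->
  exists F0 : set X, finite_set F0 /\ forall s, uniq s -> F0 `<=` [set x | x \in s] ->
    nrm (vsub (h xi) (h (proj s xi))) < e.
Proof.
case=> [Hop [_ [Hc Hexp]]] dxi e0.
have [F0 [fF0 HF0]] := Hexp xi dxi e e0.
exists F0; split => // s us sub.
have := HF0 [set x | x \in s] (finite_seq s) sub.
by rewrite (op_proj xi Hop Hc us); under eq_fun do rewrite sum_set_seq //.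
Qed.


Lemma op_l2 dom h xi : is_operator dom h -> dom xi -> L2 (h xi).
Proof. by case=> [_ [_ [_ [_ [H _]]]]]; apply: H. Qed.

Lemma op_dom_l2 dom h xi : is_operator dom h -> dom xi -> L2 xi.
Proof. by case=> [H _]; apply: H. Qed.

Lemma union_seq (A B : set X) : finite_set A -> finite_set B ->
  exists s, uniq s /\ A `<=` [set x | x \in s] /\ B `<=` [set x | x \in s].
Proof.
move=> fA fB; exists (finmap.enum_fset (fset_set (A `|` B))); split.
  exact: finmap.fset_uniq.
have fAB : finite_set (A `|` B) by rewrite finite_setU.
by split => x Hx /=; rewrite in_fset_set // inE; [left|right].
Qed.

Lemma partA_le dom_h dom_k h k xi : admissible dom_h h -> admissible dom_k k ->
  dom_h xi -> dom_k xi -> nrm xi <= 1 ->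
  ((nrm (vsub (h xi) (k xi)))%:E <=
    opnorm (@c00 R X) (fun xi => vsub (h xi) (k xi)))%E.
Proof.
move=> Ah Ak dh dk n1.
have Hoh := Ah.1; have Hok := Ak.1.
have Hch := Ah.2.2.1; have Hck := Ak.2.2.1.
apply/lee_addgt0Pr => e e0.
have e20 : 0 < e / 2 by rewrite divr_gt0.
have [F1 [fF1 H1]] := exp_proj Ah dh e20.
have [F2 [fF2 H2]] := exp_proj Ak dk e20.
have [s [us [s1 s2]]] := union_seq fF1 fF2.
have := H1 s us s1; have := H2 s us s2.
set P := proj s xi => a2 a1.
have dPh : dom_h P by apply: Hch; apply: proj_c00.
have dPk : dom_k P by apply: Hck; apply: proj_c00.
have Lhx := op_l2 Hoh dh; have Lkx := op_l2 Hok dk.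
have LhP := op_l2 Hoh dPh; have LkP := op_l2 Hok dPk.
have [L3 t3] := l2_tri (l2_vsub LhP LkP) (l2_vsub LkP Lkx).
have [L4 t4] := l2_tri (l2_vsub Lhx LhP) L3.
have Lxi : L2 xi := op_dom_l2 Hoh dh.
have [_ nP] := proj_le s Lxi.
have ub : ((nrm (vsub (h P) (k P)))%:E <=
    opnorm (@c00 R X) (fun xi => vsub (h xi) (k xi)))%E.
  apply: ereal_sup_ubound; exists P => //; split; first exact: proj_c00.
  exact: le_trans nP n1.
apply: le_trans _ (leeD2r _ ub); rewrite -EFinD lee_fin.
rewrite nrm_sym in a2.
have : e = e / 2 + e / 2 by rewrite -splitr.
move=> ->; lra.
Qed.


Lemma nrm_scale v r : L2 v -> 0 <= r ->
  L2 (fun x => r%:C * v x) /\ nrm (fun x => r%:C * v x) <= r * nrm v.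
Proof.
move=> Lv r0; apply: sqs_l2; first by rewrite mulr_ge0 // nrm_ge0.
move=> s us; rewrite /sqs.
under eq_bigr do rewrite sqmodZ.
rewrite -mulr_sumr exprMn; apply: ler_wpM2l; first exact: sqr_ge0.
exact: l2_sqs.
Qed.

Lemma opnorm_bound dom_h dom_k h k : admissible dom_h h -> admissible dom_k k ->
  (opnorm (@c00 R X) (fun xi => vsub (h xi) (k xi)) < +oo)%E ->
  exists M, 0 <= M /\ forall v, @c00 R X v -> nrm v <= 1 -> nrm (vsub (h v) (k v)) <= M.
Proof.
move=> Ah Ak; set O := opnorm _ _ => Olt.
have ub : forall v, @c00 R X v -> nrm v <= 1 -> ((nrm (vsub (h v) (k v)))%:E <= O)%E.
  by move=> v cv nv; apply: ereal_sup_ubound; exists v.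
move: Olt ub; case: O => [r| |] // _ ub.
- exists `|r|; split => // v cv nv; apply: le_trans (ler_norm r).
  by rewrite -lee_fin; apply: ub.
- exists 0; split => // v cv nv; have := ub v cv nv.
  by rewrite leeNy_eq.
Qed.

Lemma bound_scaled dom_h dom_k h k M v d : admissible dom_h h -> admissible dom_k k ->
  (forall v, @c00 R X v -> nrm v <= 1 -> nrm (vsub (h v) (k v)) <= M) ->
  @c00 R X v -> 0 < d -> nrm v <= d -> nrm (vsub (h v) (k v)) <= M * d.
Proof.
move=> Ah Ak HM cv d0 nv.
have Hoh := Ah.1; have Hok := Ak.1.
have Hch := Ah.2.2.1; have Hck := Ak.2.2.1.
pose w := fun x => (d^-1)%:C * v x.
have cw : @c00 R X w.
  apply: (sub_finite_set _ cv) => x /=; rewrite /w; apply: contra_neq => ->; by rewrite mulr0.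
have Lv : L2 v := op_dom_l2 Hoh (Hch _ cv).
have d'0 : 0 < d^-1 by rewrite invr_gt0.
have [_ nw] := nrm_scale Lv (ltW d'0).
have nw1 : nrm w <= 1.
  apply: le_trans nw _; rewrite -(mulVf (lt0r_neq0 d0)); apply: ler_wpM2l => //.
  by rewrite ltW // invr_gt0.
have vw : v = fun x => d%:C * w x.
  apply: funext => x; rewrite /w mulrA -rmorphM /= divff ?gt_eqF //.
  by rewrite mul1r.
have Hw := HM w cw nw1.
have dw := Hch _ cw; have dkw := Hck _ cw.
have Lhw := op_l2 Hoh dw; have Lkw := op_l2 Hok dkw.
have [_ ns] := nrm_scale (l2_vsub Lhw Lkw) (ltW d0).
have -> : vsub (h v) (k v) = fun x => d%:C * vsub (h w) (k w) x.
  rewrite vw; case: (Hoh) => [_ [_ [_ [_ [_ [_ hs]]]]]].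
  case: (Hok) => [_ [_ [_ [_ [_ [_ ks]]]]]].
  rewrite hs // ks //; apply: funext => x; by rewrite /vsub mulrBr.
apply: le_trans ns _; rewrite mulrC; apply: ler_wpM2r => //; exact: ltW.
Qed.


Lemma sqs_sub v (a b : seq X) : uniq a -> uniq b -> {subset a <= b} -> sqs v a <= sqs v b.
Proof.
move=> ua ub sab; rewrite /sqs.
have -> : \sum_(x <- a) sqmod (v x) = \sum_(x <- b | x \in a) sqmod (v x).
  rewrite -[RHS]big_filter; apply: perm_big; apply: uniq_perm => //.
    exact: filter_uniq.
  move=> x; rewrite mem_filter; case: (boolP (x \in a)) => //= /sab ->.
  by [].
rewrite big_mkcond; apply: ler_sum => x _; case: ifP => // _; exact: sqmod_ge0.
Qed.

Lemma sqmod0 : sqmod (0 : R[i]) = 0.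
Proof. by rewrite /sqmod /= expr0n /= addr0. Qed.

Lemma sqs_tail v s t :
  sqs (vsub (proj s v) v) t = sqs v [seq x <- t | x \notin s].
Proof.
rewrite /sqs big_filter [RHS]big_mkcond; apply: eq_bigr => x _.
rewrite /vsub /proj; case: ifP => _ /=; first by rewrite subrr sqmod0.
by rewrite sub0r sqmodN.
Qed.

Lemma tail v e : L2 v -> 0 < e -> exists G, uniq G /\ forall s, uniq s ->
  {subset G <= s} -> L2 (vsub (proj s v) v) /\ nrm (vsub (proj s v) v) <= e.
Proof.
move=> Lv e0.
have e20 : 0 < e ^+ 2 by rewrite exprn_gt0.
have fin : sqnorm v \is a fin_num by rewrite fin_sqnorm.
have [y [A [fA _] <-] Hx] := ub_ereal_sup_adherent e20 fin.
rewrite fsbig_finite // sumEFin in Hx.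
exists (finmap.enum_fset (fset_set A)); split; first exact: finmap.fset_uniq.
move=> s us sub; apply: sqs_l2; first exact: ltW.
move=> t ut; rewrite sqs_tail.
have u2 : uniq (s ++ [seq x <- t | x \notin s]).
  rewrite cat_uniq us filter_uniq // andbT /=; apply/hasPn => z.
  by rewrite mem_filter => /andP [].
have H1 := l2_sqs Lv u2.
rewrite /sqs big_cat /= -/(sqs v s) -/(sqs v _) in H1.
have H2 := sqs_sub v (finmap.fset_uniq _) us sub.
have Hx' : (sqnorm v - (e ^+ 2)%:E < (sqs v (finmap.enum_fset (fset_set A)))%:E)%E := Hx.
rewrite fin_sqnorm // -EFinB lte_fin in Hx'.
rewrite nrm_sq // in H1.
lra.
Qed.

Lemma Re_sub (z w : R[i]) : complex.Re (z - w) = complex.Re z - complex.Re w.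
Proof. by case: z => a b; case: w => c d. Qed.

Lemma Im_sub (z w : R[i]) : complex.Im (z - w) = complex.Im z - complex.Im w.
Proof. by case: z => a b; case: w => c d. Qed.

Lemma Re_le (z : R[i]) : complex.Re z ^+ 2 <= sqmod z.
Proof. by rewrite /sqmod lerDl sqr_ge0. Qed.

Lemma Im_le (z : R[i]) : complex.Im z ^+ 2 <= sqmod z.
Proof. by rewrite /sqmod lerDr sqr_ge0. Qed.

Lemma abs_le_sq (a b : R) : 0 <= b -> a ^+ 2 <= b ^+ 2 -> `|a| <= b.
Proof.
move=> b0 H; rewrite -ler_sqr ?nnegrE ?normr_ge0 //.
by rewrite real_normK // num_real.
Qed.


Lemma partB dom_h dom_k h k : admissible dom_h h -> admissible dom_k k ->
  (opnorm (@c00 R X) (fun xi => vsub (h xi) (k xi)) < +oo)%E -> dom_h `<=` dom_k.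
Proof.
move=> Ah Ak Hfin xi dxi.
have [M [M0 HM]] := opnorm_bound Ah Ak Hfin.
have Hoh := Ah.1; have Hok := Ak.1.
have Hch := Ah.2.2.1; have Hck := Ak.2.2.1.
have Lxi : L2 xi := op_dom_l2 Hoh dxi.
pose e n : R := harmonic n.
have e0 n : 0 < e n by apply: harmonic_gt0.
have Hs : forall n, exists s, uniq s /\ nrm (vsub (h xi) (h (proj s xi))) < e n /\
    L2 (vsub (proj s xi) xi) /\ nrm (vsub (proj s xi) xi) <= e n.
  move=> n; have [F0 [fF0 HF0]] := exp_proj Ah dxi (e0 n).
  have [G [uG HG]] := tail Lxi (e0 n).
  have [s [us [s1 s2]]] := union_seq fF0 (finite_seq G).
  exists s; split => //; split; first exact: HF0.
  apply: HG => // x xG; exact: s2 x xG.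
case: (choice Hs) => S HS.
pose u n := proj (S n) xi.
have cu n : @c00 R X (u n) by apply: proj_c00.
have dhu n : dom_h (u n) by apply: Hch.
have dku n : dom_k (u n) by apply: Hck.
pose w n := vsub (h (u n)) (k (u n)).
have Lw n : L2 (w n) := l2_vsub (op_l2 Hoh (dhu n)) (op_l2 Hok (dku n)).
have Hww : forall n m, L2 (vsub (w n) (w m)) /\ nrm (vsub (w n) (w m)) <= M * (e n + e m).
  move=> n m.
  have [Lum num] : L2 (vsub (u n) (u m)) /\ nrm (vsub (u n) (u m)) <= e n + e m.
    have [_ [_ [L1 n1]]] := HS n; have [_ [_ [L2m n2]]] := HS m.
    have L2' : L2 (vsub xi (u m)).
      by apply: (l2_eq _ L2m) => x; rewrite /vsub sqmod_sub_sym.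
    have [L3 t3] := l2_tri L1 L2'; split => //.
    by apply: le_trans t3 _; rewrite (nrm_sym xi); exact: lerD.
  have cum : @c00 R X (vsub (u n) (u m)).
    apply: (@c00_sub _ (S n ++ S m)) => x; rewrite mem_cat /vsub /u /proj.
    by case: ifP => //; case: ifP => //; rewrite subrr eqxx.
  have Hb := bound_scaled Ah Ak HM cum (addr_gt0 (e0 n) (e0 m)) num.
  have eqw : vsub (w n) (w m) = vsub (h (vsub (u n) (u m))) (k (vsub (u n) (u m))).
    rewrite (op_sub Hoh) // (op_sub Hok) //; apply: funext => x; rewrite /vsub /w /vsub.
    ring.
  rewrite eqw; split => //.
  exact: l2_vsub (op_l2 Hoh (Hch _ cum)) (op_l2 Hok (Hck _ cum)).
have Hpt : forall x n m, `|complex.Re (w n x) - complex.Re (w m x)| <= M * (e n + e m) /\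
    `|complex.Im (w n x) - complex.Im (w m x)| <= M * (e n + e m).
  move=> x n m; have [L nb] := Hww n m.
  have Mp : 0 <= M * (e n + e m) by rewrite mulr_ge0 // addr_ge0 // ltW.
  have sq := sqmod_le_nrm x L.
  have sq2 : nrm (vsub (w n) (w m)) ^+ 2 <= (M * (e n + e m)) ^+ 2.
    by rewrite ler_sqr ?nnegrE ?nrm_ge0.
  split; apply: abs_le_sq => //; apply: le_trans sq2; apply: le_trans sq.
    by rewrite /vsub -Re_sub Re_le.
  by rewrite /vsub -Im_sub Im_le.
have Hcauchy : forall (f : nat -> R), (forall n m, `|f n - f m| <= M * (e n + e m)) -> cvgn f.
  move=> f Hf; apply: cauchy_seq_cvg => eps eps0.
  have [N HN] := harmonic_small (2 * M) eps0.
  exists N => n m Nn Nm; apply: le_lt_trans (Hf n m) _; apply: le_lt_trans HN.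
  rewrite [2 * M]mulrC -mulrA; apply: ler_wpM2l => //.
  have := harmonic_anti R Nn; have := harmonic_anti R Nm; rewrite /e; lra.
have Hre x : cvgn (fun n => complex.Re (w n x)).
  by apply: Hcauchy => n m; case: (Hpt x n m).
have Him x : cvgn (fun n => complex.Im (w n x)).
  by apply: Hcauchy => n m; case: (Hpt x n m).
pose re x := lim ((fun n => complex.Re (w n x)) @ \oo).
pose im x := lim ((fun n => complex.Im (w n x)) @ \oo).
pose eta0 : vec := fun x => re x +i* im x.
have Hwe : forall n, L2 (vsub (w n) eta0) /\ nrm (vsub (w n) eta0) <= 2 * M * e n.
  move=> n; apply: sqs_l2; first by rewrite mulr_ge0 // ?mulr_ge0 // ltW.
  move=> t ut.
  have cv : (fun m => sqs (vsub (w n) (w m)) t) @ \oo --> sqs (vsub (w n) eta0) t.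
    rewrite /sqs; apply: cvg_sum_seq => x.
    have E : (fun m => sqmod (vsub (w n) (w m) x)) = fun m =>
      (complex.Re (w n x) - complex.Re (w m x)) ^+ 2 + (complex.Im (w n x) - complex.Im (w m x)) ^+ 2.
      by apply: funext => m; rewrite /sqmod -Re_sub -Im_sub.
    have E2 : sqmod (vsub (w n) eta0 x) =
      (complex.Re (w n x) - re x) ^+ 2 + (complex.Im (w n x) - im x) ^+ 2.
      by rewrite /sqmod -[re x]/(complex.Re (eta0 x)) -[im x]/(complex.Im (eta0 x)) -Re_sub -Im_sub.
    rewrite E E2.
    apply: cvgD; apply: cvg_sqr_diff; [exact: Hre|exact: Him].
  rewrite -(cvg_lim (@Rhausdorff R) cv); apply: limr_le; first by apply/cvg_ex; eexists; exact: cv.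
  have Hb : forall m, (n <= m)%N -> sqs (vsub (w n) (w m)) t <= (2 * M * e n) ^+ 2.
    move=> m nm; have [L nb] := Hww n m.
    apply: le_trans (l2_sqs L ut) _.
    have en0 : 0 <= 2 * M * e n by rewrite !mulr_ge0 // ltW.
    rewrite ler_sqr ?nnegrE ?nrm_ge0 //.
    apply: le_trans nb _; rewrite (mulrC 2 M) -mulrA; apply: ler_wpM2l => //.
    by rewrite mulr_natl mulr2n lerD2l; apply: harmonic_anti.
  exists n => // m /= nm; exact: Hb.
have Leta0 : L2 eta0.
  apply: (l2_eq _ (l2_vsub (Lw 0%N) (Hwe 0%N).1)) => x.
  by rewrite /vsub subKr.
pose eta := vsub (h xi) eta0.
have Lhxi := op_l2 Hoh dxi.
have Leta : L2 eta := l2_vsub Lhxi Leta0.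
have conv1 : (fun n => nrm (vsub (u n) xi)) @ \oo --> (0 : R^o).
  apply: (@squeeze_cvgr _ _ _ _ (fun _ => 0) e); last exact: cvg_harmonic.
    exists 0%N => // n _ /=; rewrite nrm_ge0 /=; by case: (HS n) => _ [_ [_ ->]].
  exact: cvg_cst.
have conv2 : (fun n => nrm (vsub (k (u n)) eta)) @ \oo --> (0 : R^o).
  apply: (@squeeze_cvgr _ _ _ _ (fun _ => 0) (fun n => (1 + 2 * M) * e n)).
  - exists 0%N => // n _ /=; rewrite nrm_ge0 /=.
    pose b := vsub (h xi) (w n).
    have Lhu := op_l2 Hoh (dhu n).
    have E1 : forall x, sqmod (vsub (k (u n)) b x) = sqmod (vsub (h xi) (h (u n)) x).
      move=> x; rewrite /vsub /b /w /vsub.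
      have -> : k (u n) x - (h xi x - (h (u n) x - k (u n) x)) = - (h xi x - h (u n) x) by ring.
      by rewrite sqmodN.
    have E2 : forall x, sqmod (vsub b eta x) = sqmod (vsub (w n) eta0 x).
      move=> x; rewrite /vsub /b /eta /vsub.
      have -> : h xi x - w n x - (h xi x - eta0 x) = - (w n x - eta0 x) by ring.
      by rewrite sqmodN.
    have L1 : L2 (vsub (k (u n)) b) := l2_eq (fun x => esym (E1 x)) (l2_vsub Lhxi Lhu).
    have L2' : L2 (vsub b eta) := l2_eq (fun x => esym (E2 x)) (Hwe n).1.
    have [_ t] := l2_tri L1 L2'.
    apply: le_trans t _; rewrite (nrm_eq E1) (nrm_eq E2).
    have := (HS n).2.1; have := (Hwe n).2; rewrite -/(u n).
    move=> a1 a2; rewrite mulrDl mul1r; apply: lerD; first exact: ltW.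
    exact: a1.
  - exact: cvg_cst.
  - rewrite -(mulr0 (1 + 2 * M)); apply: cvgMr; exact: cvg_harmonic.
have [dk _] := Ak.2.1 u xi eta dku Lxi Leta conv1 conv2.
exact: dk.
Qed.

Lemma opnorm_sym (D : set vec) (h k : vec -> vec) : opnorm D (fun xi => vsub (h xi) (k xi)) =
  opnorm D (fun xi => vsub (k xi) (h xi)).
Proof. by rewrite /opnorm; congr ereal_sup; apply: eq_imagel => xi _; rewrite nrm_sym. Qed.

End Aux.

Theorem proposition2p1p2 (R : realType) (X : choiceType) (d : X -> X -> R)
  (dom_h dom_k : set (vec R X)) (h k : vec R X -> vec R X) :
  is_metric d -> unif_loc_finite d ->
  admissible dom_h h -> admissible dom_k k ->
  (* (a) *)
  opnorm (dom_h `&` dom_k) (fun xi => vsub (h xi) (k xi))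
    = opnorm (@c00 R X) (fun xi => vsub (h xi) (k xi)) /\
  (* (b) *)
  ((opnorm (@c00 R X) (fun xi => vsub (h xi) (k xi)) < +oo)%E -> dom_h = dom_k).
Proof.
move=> _ _ Ah Ak; split.
- apply/eqP; rewrite eq_le; apply/andP; split.
  + apply: ge_ereal_sup => _ [xi [[dh dk] n1] <-]; exact: (partA_le Ah Ak dh dk n1).
  + apply: ereal_sup_le => _ [xi [cx n1] <-]; exists xi; last by [].
    split; last exact: n1.
    by split; [exact: Ah.2.2.1 | exact: Ak.2.2.1].
- move=> Hf; apply/seteqP; split; first exact: partB Ah Ak Hf.
  have Hf' : (opnorm (@c00 R X) (fun xi => vsub (k xi) (h xi)) < +oo)%E.
    by rewrite opnorm_sym.
  exact: (partB Ak Ah Hf').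
Qed.
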